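(* Assume the common support assumption, the overlap assumption and the unconfoundedness assumption. Then for all $x\in\mathcal X$, $\theta(x)=\Gamma(x,p)$, where $p=p_0$ under Design 1 and $p=0$ under Design 2.
   Context: Population variables: $Y^*\in\{0,1\}$ (outcome), $T^*\in\{0,1\}$ (treatment), $X^*$ (covariate vector). Potential outcomes $Y^*(1),Y^*(0)\in\{0,1\}$ satisfy $Y^*=T^*Y^*(1)+(1-T^* )Y^*(0)$. Let $p_0:=\Pr(Y^*=1)$. The observed vector $(Y,T,X)$ arises from Bernoulli sampling: $Y\in\{0,1\}$ is drawn with known probability $h_0:=\Pr(Y=1)\in(0,1)$, and given $Y=y$, $(T,X)$ is drawn from a distribution $\mathcal P_y$. Densities (or mass functions) are denoted by $f$. Design 1 (case-control): for all $t\in\{0,1\}$, $x\in\mathcal X$, $y\in\{0,1\}$, $f_{X|Y}(x\mid y)=f_{X^*|Y^*}(x\mid y)$ and $\Pr(T=t\mid X=x,Y=y)=\Pr(T^*=t\mid X^*=x,Y^*=y)$. Design 2 (case-population): for all $t,x$, $f_{X|Y}(x\mid 0)=f_{X^*}(x)$, $\Pr(T=t\mid X=x,Y=0)=\Pr(T^*=t\mid X^*=x)$, $f_{X|Y}(x\mid 1)=f_{X^*|Y^*}(x\mid 1)$, $\Pr(T=t\mid X=x,Y=1)=\Pr(T^*=t\mid X^*=x,Y^*=1)$. Common support assumption: the support of $X^*$ and that of $X$ given $Y=y$ for $y=0,1$ coincide; call it $\mathcal X$. Let $\Pi(t\mid y,x):=\Pr(T=t\mid Y=y,X=x)$, assumed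 nonzero for all $t,y\in\{0,1\}$. For $p\in[0,1]$, under Design 1, $r(x,p):=\frac{p(1-h_0)\Pr(Y=1\mid X=x)}{p(1-h_0)\Pr(Y=1\mid X=x)+h_0(1-p)\Pr(Y=0\mid X=x)}$, and under Design 2, $r(x,p):=\frac{p(1-h_0)}{h_0}\frac{\Pr(Y=1\mid X=x)}{\Pr(Y=0\mid X=x)}$. Define $\Gamma(x,p):=\frac{\Pi(1\mid 1,x)}{\Pi(0\mid 1,x)}\cdot\frac{\Pi(0\mid 0,x)+r(x,p)\{\Pi(0\mid 1,x)-\Pi(0\mid 0,x)\}}{\Pi(1\mid 0,x)+r(x,p)\{\Pi(1\mid 1,x)-\Pi(1\mid 0,x)\}}$. Causal relative risk: $\theta(x):=\Pr\{Y^*(1)=1\mid X^*=x\}/\Pr\{Y^*(0)=1\mid X^*=x\}$ (denominator assumed positive). Overlap: for all $(t,x)\in\{0,1\}\times\mathcal X$, $0<\Pr\{Y^*(t)=1\mid X^*=x\}<1$ and $0<\Pr(T^*=1\mid X^*=x)<1$. Unconfoundedness: for all $t\in\{0,1\}$, $x\in\mathcal X$, $\Pr\{Y^*(t)=1\mid T^*=1,X^*=x\}=\Pr\{Y^*(t)=1\mid T^*=0,X^*=x\}$. *)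

(* Defs.v *)
From HB Require Import structures.
From mathcomp Require Import all_boot all_order all_algebra.
From mathcomp Require Import all_classical all_reals all_analysis.
Set Implicit Arguments. Unset Strict Implicit. Unset Printing Implicit Defensive.
Import Order.TTheory GRing.Theory Num.Theory.
Local Open Scope ring_scope.
Local Open Scope classical_set_scope.

(* Population.  The covariate Xs lives in a measurable space X with a base  *)
(* measure mu.  The joint law of (Ys(1), Ys(0), Ts, Xs) is given by a        *)
(* density  g y1 y0 t x  w.r.t. (counting on {0,1}^3) x mu.  The observed     *)
(* outcome is Ys = Ts Ys(1) + (1 - Ts) Ys(0).  Booleans encode {0,1}.        *)

Section Defs.
Variables (R : realType) (d : measure_display) (X : measurableType d).
Implicit Types (g : bool -> bool -> bool -> X -> R) (x : X).

Definition Ystar (y1 y0 t : bool) : bool := if t then y1 else y0.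

Definition mass g (E : bool -> bool -> bool -> bool) x : R :=
  \sum_(y1 : bool) \sum_(y0 : bool) \sum_(t : bool)
     (if E y1 y0 t then g y1 y0 t x else 0).

Definition fXs g x : R := mass g (fun _ _ _ => true) x.

Definition condX g E x : R := mass g E x / fXs g x.

Definition condXF g E F x : R :=
  mass g (fun y1 y0 t => E y1 y0 t && F y1 y0 t) x / mass g F x.

Definition PrPO g (t : bool) x : R := condX g (fun y1 y0 _ => if t then y1 else y0) x.

Definition PrT1 g x : R := condX g (fun _ _ t => t) x.

Definition PrPO_T g (t s : bool) x : R :=
  condXF g (fun y1 y0 _ => if t then y1 else y0) (fun _ _ t' => t' == s) x.

Definition theta g x : R := PrPO g true x / PrPO g false x.

Definition PrYs (mu : {measure set X -> \bar R}) g (y : bool) : R :=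
  fine (\int[mu]_x (mass g (fun y1 y0 t => Ystar y1 y0 t == y) x)%:E).

Definition p0 (mu : {measure set X -> \bar R}) g : R := PrYs mu g true.

Definition fXs_given_Ys (mu : {measure set X -> \bar R}) g (y : bool) x : R :=
  mass g (fun y1 y0 t => Ystar y1 y0 t == y) x / PrYs mu g y.

Definition PrTs_given_XY g (t y : bool) x : R :=
  condXF g (fun _ _ t' => t' == t) (fun y1 y0 t' => Ystar y1 y0 t' == y) x.

Definition PrTs_given_X g (t : bool) x : R := condX g (fun _ _ t' => t' == t) x.

Definition supp (f : X -> R) : set X := [set x | 0 < f x].

(* Observed data.  Y ~ Bernoulli(h0); given Y = y, X has density             *)
(* fobs y = f_{X|Y}(. | y) w.r.t. mu and Pr(T = t | Y = y, X = x) = Pi t y x. *)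

(* Pr(Y = 1 | X = x) and Pr(Y = 0 | X = x), by Bayes' rule *)
Definition PrY_given_X (h0 : R) (fobs : bool -> X -> R) (y : bool) x : R :=
  (if y then h0 * fobs true x else (1 - h0) * fobs false x)
  / (h0 * fobs true x + (1 - h0) * fobs false x).

Inductive design := Design1 | Design2.

Definition rfun (D : design) h0 fobs x (p : R) : R :=
  match D with
  | Design1 =>
      p * (1 - h0) * PrY_given_X h0 fobs true x
      / (p * (1 - h0) * PrY_given_X h0 fobs true x
         + h0 * (1 - p) * PrY_given_X h0 fobs false x)
  | Design2 =>
      p * (1 - h0) / h0 * (PrY_given_X h0 fobs true x / PrY_given_X h0 fobs false x)
  end.

Definition Gamma (D : design) h0 fobs (Pi : bool -> bool -> X -> R) x (p : R) : R :=
  let r := rfun D h0 fobs x p in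
  Pi true true x / Pi false true x
  * ((Pi false false x + r * (Pi false true x - Pi false false x))
     / (Pi true false x + r * (Pi true true x - Pi true false x))).

Definition design_holds (D : design) (mu : {measure set X -> \bar R}) g
    (fobs : bool -> X -> R) (Pi : bool -> bool -> X -> R) (calX : set X) : Prop :=
  match D with
  | Design1 => forall x, calX x -> forall (y t : bool),
      fobs y x = fXs_given_Ys mu g y x /\ Pi t y x = PrTs_given_XY g t y x
  | Design2 => forall x, calX x -> forall t : bool,
      [/\ fobs false x = fXs g x, Pi t false x = PrTs_given_X g t x,
          fobs true x = fXs_given_Ys mu g true x
        & Pi t true x = PrTs_given_XY g t true x]
  end.

Definition p_of (D : design) (mu : {measure set X -> \bar R}) g : R :=
  match D with Design1 => p0 mu g | Design2 => 0 end.

End Defs.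

(* Main.v *)
Require Import Defs.
From HB Require Import structures.
From mathcomp Require Import all_boot all_order all_algebra.
From mathcomp Require Import all_classical all_reals all_analysis.
From mathcomp Require Import ring lra.
Import Order.TTheory GRing.Theory Num.Theory.
Local Open Scope ring_scope.
Local Open Scope classical_set_scope.
Lemma fine_sum1 (R:realType) (a b : \bar R) : (0 <= a)%E -> (0<=b)%E -> (a + b = 1)%E -> fine b = 1 - fine a.
Proof.
case: a => [a| |]; case: b => [b| |] //=.
move=> _ _ [] <-; ring.
Qed.
Lemma mass_meas (R : realType) (d : measure_display) (X : measurableType d) (g : bool -> bool -> bool -> X -> R) E :
  (forall y1 y0 t, measurable_fun setT (g y1 y0 t)) -> measurable_fun setT (mass g E).
Proof.
move=> Hg; rewrite /mass.
apply: measurable_sum => y1; apply: measurable_sum => y0; apply: measurable_sum => t.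
case: (E y1 y0 t) => //; exact: measurable_cst.
Qed.
Lemma avg_eq {R : realFieldType} {a b m1 m0 : R} : 0 < m1 -> 0 < m0 -> a / m1 = b / m0 ->
  (a + b) / (m1 + m0) = a / m1.
Proof.
move=> h1 h0 e.
have -> : b = a / m1 * m0 by rewrite e; field; lra.
field; lra.
Qed.

Theorem theorem1 (R : realType) (d : measure_display) (X : measurableType d)
  (mu : {measure set X -> \bar R})
  (g : bool -> bool -> bool -> X -> R)
  (h0 : R) (fobs : bool -> X -> R) (Pi : bool -> bool -> X -> R)
  (D : design) :
  (forall y1 y0 t x, 0 <= g y1 y0 t x) ->
  (forall y1 y0 t, measurable_fun setT (g y1 y0 t)) ->
  ((\int[mu]_x (fXs g x)%:E)%E = 1%E) ->
  0 < h0 < 1 ->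
  (forall y x, 0 <= fobs y x) ->
  (forall y, measurable_fun setT (fobs y)) ->
  (forall y, (\int[mu]_x (fobs y x)%:E)%E = 1%E) ->
  (forall t y x, 0 <= Pi t y x) ->
  (forall y x, Pi true y x + Pi false y x = 1) ->
  supp (fobs false) = supp (fXs g) ->
  supp (fobs true) = supp (fXs g) ->
  (forall t y x, supp (fXs g) x -> Pi t y x != 0) ->
  (forall t x, supp (fXs g) x -> 0 < PrPO g t x < 1) ->
  (forall x, supp (fXs g) x -> 0 < PrT1 g x < 1) ->
  (forall t x, supp (fXs g) x -> PrPO_T g t true x = PrPO_T g t false x) ->
  design_holds D mu g fobs Pi (supp (fXs g)) ->
  forall x, supp (fXs g) x ->
    theta g x = Gamma D h0 fobs Pi x (p_of D mu g).
Proof.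
move=> Hg0 Hgm HF Hh Hf0 Hfm Hf1 HPi0 HPi1 Sf0 Sf1 HPinz Hov HovT Hunc HD x Hx.
pose n11 := g true true true x + g true false true x.
pose n10 := g false true true x + g false false true x.
pose n01 := g true true false x + g false true false x.
pose n00 := g true false false x + g false false false x.
pose c := g true true false x + g true false false x.
pose e := g true true true x + g false true true x.
have n11p : 0 <= n11 by rewrite /n11 addr_ge0.
have n10p : 0 <= n10 by rewrite /n10 addr_ge0.
have n01p : 0 <= n01 by rewrite /n01 addr_ge0.
have n00p : 0 <= n00 by rewrite /n00 addr_ge0.
have eF : fXs g x = n11 + n10 + n01 + n00.
  by rewrite /fXs /mass !big_bool /= /n11 /n10 /n01 /n00; ring.
have Fp : 0 < n11 + n10 + n01 + n00 by rewrite -eF; exact: Hx.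
have eT1 : PrT1 g x = (n11 + n10) / (n11 + n10 + n01 + n00).
  rewrite /PrT1 /condX -eF; congr (_ / _).
  by rewrite /mass !big_bool /= /n11 /n10; ring.
have [m1p m1lt] : 0 < n11 + n10 /\ n11 + n10 < n11 + n10 + n01 + n00.
  move: (HovT x Hx); rewrite eT1 => /andP[a b].
  split.
    by rewrite ltr_pdivlMr // mul0r in a.
  by rewrite ltr_pdivrMr // mul1r in b.
have m0p : 0 < n01 + n00 by lra.
have ePO1 : PrPO g true x = (n11 + c) / (n11 + n10 + (n01 + n00)).
  rewrite /PrPO /condX eF -addrA; congr (_ / _).
  by rewrite /mass !big_bool /= /n11 /c; ring.
have ePO0 : PrPO g false x = (e + n01) / (n11 + n10 + (n01 + n00)).
  rewrite /PrPO /condX eF -addrA; congr (_ / _).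
  by rewrite /mass !big_bool /= /e /n01; ring.
have eU1 : n11 / (n11 + n10) = c / (n01 + n00).
  move: (Hunc true x Hx); rewrite /PrPO_T /condXF.
  suff [-> -> -> ->] : [/\ mass g (fun y1 y0 t' => (if true then y1 else y0) && (t' == true)) x = n11,
       mass g (fun _ _ t' => t' == true) x = n11 + n10,
       mass g (fun y1 y0 t' => (if true then y1 else y0) && (t' == false)) x = c
     & mass g (fun _ _ t' => t' == false) x = n01 + n00] by [].
  by split; rewrite /mass !big_bool /= /n11 /n10 /c /n01 /n00; ring.
have eU0 : e / (n11 + n10) = n01 / (n01 + n00).
  move: (Hunc false x Hx); rewrite /PrPO_T /condXF.
  suff [-> -> -> ->] : [/\ mass g (fun y1 y0 t' => (if false then y1 else y0) && (t' == true)) x = e,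
       mass g (fun _ _ t' => t' == true) x = n11 + n10,
       mass g (fun y1 y0 t' => (if false then y1 else y0) && (t' == false)) x = n01
     & mass g (fun _ _ t' => t' == false) x = n01 + n00] by [].
  by split; rewrite /mass !big_bool /= /e /n10 /n11 /n01 /n00; ring.
have eth : theta g x = (n11 / (n11 + n10)) / (n01 / (n01 + n00)).
  have h2 := avg_eq m0p m1p (esym eU0).
  rewrite (addrC n01) (addrC (n01 + n00)) in h2.
  by rewrite /theta ePO1 ePO0 (avg_eq m1p m0p eU1) h2.
have ePi1 : forall t, PrTs_given_XY g t true x = (if t then n11 else n01) / (n11 + n01).
  by case; rewrite /PrTs_given_XY /condXF /mass !big_bool /= /n11 /n01; congr (_ / _); ring.
have ePi0 : forall t, PrTs_given_XY g t false x = (if t then n10 else n00) / (n10 + n00).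
  by case; rewrite /PrTs_given_XY /condXF /mass !big_bool /= /n10 /n00; congr (_ / _); ring.
rewrite eth.
case: D HD => /= HD.
- have mge0 : forall E z, 0 <= mass g E z.
    move=> E z; rewrite /mass; apply: sumr_ge0 => y1 _; apply: sumr_ge0 => y0 _.
    by apply: sumr_ge0 => t _; case: ifP.
  have eI : (\int[mu]_z (mass g (fun y1 y0 t => Ystar y1 y0 t == true) z)%:E
           + \int[mu]_z (mass g (fun y1 y0 t => Ystar y1 y0 t == false) z)%:E)%E = 1%E.
    rewrite -ge0_integralD //.
    - rewrite -HF; apply: eq_integral => z _; rewrite -EFinD; congr EFin.
      by rewrite /fXs /mass !big_bool /= /Ystar /=; ring.
    - by move=> z _; rewrite lee_fin.
    - by apply/measurable_realfun.measurable_EFinP; exact: mass_meas.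
    - by move=> z _; rewrite lee_fin.
    - by apply/measurable_realfun.measurable_EFinP; exact: mass_meas.
  have eP0 : PrYs mu g false = 1 - PrYs mu g true.
    rewrite /PrYs; apply: fine_sum1 eI; apply: integral_ge0 => z _; by rewrite lee_fin.
  have [ef1 P11] := HD x Hx true true.
  have [ef0 P00] := HD x Hx false false.
  have [_ P01] := HD x Hx true false.
  have [_ P10] := HD x Hx false true.
  rewrite /fXs_given_Ys eP0 in ef0.
  rewrite /fXs_given_Ys in ef1.
  have eM1 : mass g (fun y1 y0 t => Ystar y1 y0 t == true) x = n11 + n01.
    by rewrite /mass !big_bool /= /Ystar /= /n11 /n01; ring.
  have eM0 : mass g (fun y1 y0 t => Ystar y1 y0 t == false) x = n10 + n00.
    by rewrite /mass !big_bool /= /Ystar /= /n10 /n00; ring.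
  rewrite eM1 in ef1; rewrite eM0 in ef0.
  have f0p : 0 < fobs false x by have : supp (fobs false) x by rewrite Sf0.
  have f1p : 0 < fobs true x by have : supp (fobs true) x by rewrite Sf1.
  have h0p : 0 < h0 by case/andP: Hh.
  have h0lt : h0 < 1 by case/andP: Hh.
  set P1 := PrYs mu g true in ef1 ef0 *.
  have P1nz : P1 != 0.
    by apply: contraTneq f1p => P0; rewrite ef1 P0 invr0 mulr0 ltxx.
  have P0nz : 1 - P1 != 0.
    by apply: contraTneq f0p => P0; rewrite ef0 P0 invr0 mulr0 ltxx.
  have := HPinz false true x Hx.
  rewrite P01 ePi1 /= mulf_eq0 invr_eq0 negb_or => /andP[nz1 nz2].
  have := HPinz false false x Hx.
  rewrite P00 ePi0 /= mulf_eq0 invr_eq0 negb_or => /andP[nz3 nz4].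
  have Sp : 0 < h0 * fobs true x + (1 - h0) * fobs false x.
    by apply: addr_gt0; apply: mulr_gt0 => //; lra.
  have Mp : n11 + n01 + (n10 + n00) != 0.
    by apply: lt0r_neq0; lra.
  have er : rfun Design1 h0 fobs x P1 = (n11 + n01) / (n11 + n01 + (n10 + n00)).
    rewrite /rfun /PrY_given_X.
    move: (lt0r_neq0 Sp).
    set S := (h0 * fobs true x + _) => Snz.
    rewrite ef1 ef0.
    field.
    rewrite Mp Snz P0nz P1nz /=.
    have -> : (1 - h0) * (h0 * (n11 + n01)) + h0 * ((1 - h0) * (n10 + n00))
       = h0 * (1 - h0) * (n11 + n01 + (n10 + n00)) by ring.
    by rewrite mulf_neq0 // mulf_neq0 //; apply: lt0r_neq0; lra.
  rewrite /Gamma /p_of /p0 -/P1 er P11 P00 P01 P10 !ePi1 !ePi0 /=.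
  have Fnz : n11 + n10 + n01 + n00 != 0 by apply: lt0r_neq0.
  have k1 : n00 / (n10 + n00) + (n11 + n01) / (n11 + n01 + (n10 + n00)) *
     (n01 / (n11 + n01) - n00 / (n10 + n00)) = (n01 + n00) / (n11 + n10 + n01 + n00).
    by field; rewrite Fnz nz2 nz4.
  have k2 : n10 / (n10 + n00) + (n11 + n01) / (n11 + n01 + (n10 + n00)) *
     (n11 / (n11 + n01) - n10 / (n10 + n00)) = (n11 + n10) / (n11 + n10 + n01 + n00).
    by field; rewrite Fnz nz2 nz4.
  rewrite k1 k2; field.
  by rewrite Fnz nz1 nz2 (lt0r_neq0 m1p) (lt0r_neq0 m0p).
- have [_ P01 _ P11] := HD x Hx false.
  have [_ P00 _ P10] := HD x Hx true.
  have ePX : forall t, PrTs_given_X g t x = (if t then n11 + n10 else n01 + n00) / (n11 + n10 + n01 + n00).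
    by case; rewrite /PrTs_given_X /condX eF /mass !big_bool /= /n10 /n00 /n11 /n01; congr (_ / _); ring.
  have := HPinz false true x Hx.
  rewrite P11 ePi1 /= mulf_eq0 invr_eq0 negb_or => /andP[nz1 nz2].
  rewrite /Gamma /rfun P01 P00 P10 P11 !ePX !ePi1 /=.
  have f0p : 0 < fobs false x by have : supp (fobs false) x by rewrite Sf0.
  have f1p : 0 < fobs true x by have : supp (fobs true) x by rewrite Sf1.
  have h0p : 0 < h0 by case/andP: Hh.
  have h0lt : h0 < 1 by case/andP: Hh.
  have PY0p : 0 < PrY_given_X h0 fobs false x.
    rewrite /PrY_given_X; apply: divr_gt0.
      by apply: mulr_gt0 => //; lra.
    by apply: addr_gt0; apply: mulr_gt0 => //; lra.
  field.
  by rewrite nz1 nz2 (lt0r_neq0 Fp) (lt0r_neq0 m1p) (lt0r_neq0 m0p) (lt0r_neq0 PY0p) (lt0r_neq0 h0p).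
Qed.
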